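(* Let $\underline A=(A_1,\dots,A_m)\in\mathcal C_k(d)$, $1\le k\le d$. Then: (i) if $k<d$, then $L_{k+1}(\underline A)=-\infty$; (ii) $\mathrm{rank}(A_aA_b)=k$ for every $a,b\in\{1,\dots,m\}$ if and only if $L_k(\underline A)>-\infty$; (iii) the set of $\underline B=(B_1,\dots,B_m)\in\mathcal C_k(d)$ such that $\mathrm{rank}(B_aB_b)=k$ for all $a,b\in\{1,\dots,m\}$ is open and dense in $\mathcal C_k(d)$.
   Context: Fix integers $m,d\ge1$ and a probability vector $\underline p=(p_1,\dots,p_m)$ with all $p_j>0$. Let $X=\{1,\dots,m\}^{\mathbb N}$ with the Bernoulli product measure $\mathbf p=\underline p^{\mathbb N}$ and the left shift $\sigma$. A random cocycle is a tuple $\underline B=(B_1,\dots,B_m)\in{\rm Mat}(d,\mathbb R)^m$ (Euclidean topology); it defines $\mathbf B^n(\omega)=B_{\omega_{n-1}}\cdots B_{\omega_0}$. For $1\le j\le d$, $L_j(\underline B)\in[-\infty,\infty)$ is the $\mathbf p$-a.s. constant limit $\lim_n\frac1n\log s_j(\mathbf B^n(\omega))$, with $s_1\ge\dots\ge s_d$ the singular values and $\log0=-\infty$. $\mathcal C_k(d)$ is the set of $\underline B$ with $\mathrm{rank}(B_j)=k$ for all $j$ (subspace topology). *)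

(* Defs.v *)
From HB Require Import structures.
From mathcomp Require Import all_boot all_order all_algebra.
From mathcomp Require Import all_classical all_reals all_analysis.
Import Order.TTheory GRing.Theory Num.Theory.
Local Open Scope classical_set_scope.
Local Open Scope ring_scope.

(* Alphabet {1,...,m} with m >= 1 is encoded as 'I_m.+1 (m.+1 symbols). *)
Definition Omega (m : nat) := nat -> 'I_m.+1.
HB.instance Definition _ (m : nat) := Choice.on (Omega m).
HB.instance Definition _ (m : nat) := isPointed.Build (Omega m) (fun _ => ord0).

(* generators of the product (cylinder) sigma-algebra on {1..m}^N *)
Definition cyl_gen (m : nat) : set (set (Omega m)) :=
  [set A | exists (i : nat) (a : 'I_m.+1), A = [set w : Omega m | w i = a]].

Definition Seq (m : nat) := g_sigma_algebraType (cyl_gen m).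

(* P is the Bernoulli product measure p^N: its value on every cylinder
   [w_0 .. w_{n-1}] = s is the product of the p's (this determines P). *)
Definition bernoulli_product (R : realType) (m : nat) (p : 'I_m.+1 -> R)
    (P : probability (Seq m) R) : Prop :=
  forall s : seq 'I_m.+1,
    P [set w : Seq m | forall i, (i < size s)%N -> w i = nth ord0 s i]
    = (\prod_(a <- s) p a)%:E.

Fixpoint cocycle_prod (R : realType) (m d : nat) (B : 'I_m.+1 -> 'M[R]_d)
    (w : nat -> 'I_m.+1) (n : nat) : 'M[R]_d :=
  match n with
  | 0 => 1%:M
  | n'.+1 => B (w n') *m cocycle_prod R m d B w n'
  end.

Definition vnorm (R : realType) (d : nat) (v : 'rV[R]_d) : R :=
  Num.sqrt (\sum_(i < d) v 0 i ^+ 2).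

(* j-th singular value (1 <= j <= d), via the Courant-Fischer min-max
   formula: s_j(M) = max over j-dim subspaces V of min_{v in V, |v|=1} |M v|.
   A j-dim subspace is the row space of a rank-j matrix U : 'M_(j,d);
   M v is computed as v *m M^T (row-vector convention). *)
Definition sv (R : realType) (d : nat) (j : nat) (M : 'M[R]_d) : R :=
  sup [set x : R | exists U : 'M[R]_(j, d), \rank U = j /\
    x = inf [set vnorm R d ((c *m U) *m M^T) | c in [set c : 'rV[R]_j |
                                              vnorm R d (c *m U) = 1]]].

Definition elog (R : realType) (x : R) : \bar R :=
  if 0 < x then (ln x)%:E else -oo%E.

Definition lyap_limit (R : realType) (m d : nat) (P : probability (Seq m) R)
    (B : 'I_m.+1 -> 'M[R]_d) (j : nat) (l : \bar R) : Prop :=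
  {ae P, forall w : Seq m,
     (fun n : nat => ((n%:R)^-1)%:E * elog R (sv R d j (cocycle_prod R m d B w n)))%E
       @ \oo --> l}.

(* L_j(B): the P-a.s. constant limit (it exists, by Furstenberg-Kesten) *)
Definition Lyap (R : realType) (m d : nat) (P : probability (Seq m) R)
    (B : 'I_m.+1 -> 'M[R]_d) (j : nat) : \bar R :=
  xget 0%E [set l | lyap_limit R m d P B j l].

Definition Ck (R : realType) (m d k : nat) : set ('I_m.+1 -> 'M[R]_d) :=
  [set B | forall a, \rank (B a) = k].

(* Euclidean topology on Mat(d,R)^m: e-closeness (sup norm over all entries) *)
Definition close (R : realType) (m d : nat) (e : R)
    (B B' : 'I_m.+1 -> 'M[R]_d) : Prop :=
  forall a i j, `|B' a i j - B a i j| < e.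

Definition rel_open (R : realType) (m d : nat)
    (C S : set ('I_m.+1 -> 'M[R]_d)) : Prop :=
  S `<=` C /\ forall B, S B -> exists e : R, 0 < e /\
     forall B', C B' -> close R m d e B B' -> S B'.

Definition rel_dense (R : realType) (m d : nat)
    (C S : set ('I_m.+1 -> 'M[R]_d)) : Prop :=
  S `<=` C /\ forall B, C B -> forall e : R, 0 < e ->
     exists B', S B' /\ close R m d e B B'.

(* Main.v *)
Require Import Defs.
From HB Require Import structures.
From mathcomp Require Import all_boot all_order all_algebra.
From mathcomp Require Import all_classical all_reals all_analysis.
From mathcomp Require fingroup perm.
Import Order.TTheory GRing.Theory Num.Theory.
Local Open Scope classical_set_scope.
Local Open Scope ring_scope.

Module PA.
Local Open Scope classical_set_scope.
Local Open Scope ring_scope.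

Section Norms.
Variable R : realType.
Variable d : nat.

Definition n1 (p q : nat) (A : 'M[R]_(p, q)) : R := \sum_i \sum_j `|A i j|.
Arguments n1 {p q}.

Lemma n1_ge0 p q (A : 'M[R]_(p,q)) : 0 <= n1 A.
Proof. by apply: sumr_ge0 => i _; apply: sumr_ge0 => j _. Qed.

Lemma vnorm_ge0 (v : 'rV[R]_d) : 0 <= vnorm R d v.
Proof. exact: sqrtr_ge0. Qed.

Lemma vnorm0 : vnorm R d 0 = 0.
Proof.
rewrite /vnorm (eq_bigr (fun _ => 0)) ?big1 ?sqrtr0 // => i _.
by rewrite mxE expr0n.
Qed.

Lemma vnormZ (a : R) (v : 'rV[R]_d) : vnorm R d (a *: v) = `|a| * vnorm R d v.
Proof.
rewrite /vnorm (eq_bigr (fun i => a ^+ 2 * v 0 i ^+ 2)); last first.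
  by move=> i _; rewrite mxE exprMn.
by rewrite -mulr_sumr sqrtrM ?sqr_ge0 // sqrtr_sqr.
Qed.

Lemma vnorm_gt0 (v : 'rV[R]_d) : v != 0 -> 0 < vnorm R d v.
Proof.
move=> vn0; rewrite /vnorm sqrtr_gt0 lt_def sumr_ge0 ?andbT; last first.
  by move=> i _; exact: sqr_ge0.
rewrite psumr_eq0; last by move=> i _; exact: sqr_ge0.
apply: contra vn0 => /allP H; apply/eqP/rowP => i.
have := H i (mem_index_enum i); rewrite /= sqrf_eq0 => /eqP ->.
by rewrite mxE.
Qed.

Lemma vnorm_coord (v : 'rV[R]_d) i : `|v 0 i| <= vnorm R d v.
Proof.
rewrite -sqrtr_sqr ler_wsqrtr // (bigD1 i) //= lerDl.
by apply: sumr_ge0 => j _; exact: sqr_ge0.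
Qed.

Lemma vnorm_le_sum (v : 'rV[R]_d) : vnorm R d v <= \sum_i `|v 0 i|.
Proof.
have s0 : 0 <= \sum_i `|v 0 i| by apply: sumr_ge0.
rewrite -(ger0_norm s0) -sqrtr_sqr ler_wsqrtr //.
rewrite expr2 mulr_suml; apply: ler_sum => i _.
rewrite -[v 0 i ^+ 2]ger0_norm ?sqr_ge0 // normrX expr2 ler_wpM2l //.
by rewrite (bigD1 i) //= lerDl; apply: sumr_ge0.
Qed.

Lemma vnorm_mul_le (v : 'rV[R]_d) (A : 'M[R]_d) :
  vnorm R d (v *m A) <= n1 A * vnorm R d v.
Proof.
apply: (le_trans (vnorm_le_sum _)).
rewrite /n1 exchange_big /= mulr_suml; apply: ler_sum => j _.
rewrite mxE; apply: (le_trans (ler_norm_sum _ _ _)).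
rewrite mulr_suml; apply: ler_sum => i _.
by rewrite normrM mulrC ler_wpM2l // vnorm_coord.
Qed.

End Norms.
Arguments n1_ge0 {R p q}.
Arguments vnorm_ge0 {R d}.
Arguments vnorm0 {R d}.
Arguments vnormZ {R d}.
Arguments vnorm_gt0 {R d v}.
Arguments vnorm_coord {R d}.
Arguments vnorm_le_sum {R d}.
Arguments vnorm_mul_le {R d}.
Arguments n1 {R p q}.

End PA.
Import PA.

Module PB.
Local Open Scope classical_set_scope.
Local Open Scope ring_scope.
Set Implicit Arguments. Unset Strict Implicit.

Section SV.
Variable R : realType.
Variable d : nat.

Definition SU j (U : 'M[R]_(j, d)) (M : 'M[R]_d) : set R :=
  [set vnorm R d ((c *m U) *m M^T) | c in [set c : 'rV[R]_j |
                                              vnorm R d (c *m U) = 1]].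

Lemma normalize j (U : 'M[R]_(j, d)) (c0 : 'rV[R]_j) :
  c0 *m U != 0 ->
  let c := (vnorm R d (c0 *m U))^-1 *: c0 in
  vnorm R d (c *m U) = 1 /\ c *m U = (vnorm R d (c0 *m U))^-1 *: (c0 *m U).
Proof.
move=> nz c; have gt := vnorm_gt0 nz.
have cE : c *m U = (vnorm R d (c0 *m U))^-1 *: (c0 *m U) by rewrite scalemxAl.
split => //; rewrite cE vnormZ ger0_norm ?invr_ge0 ?ltW //.
by rewrite mulVf // gt_eqF.
Qed.

Lemma unit_exists j (U : 'M[R]_(j, d)) : (0 < j)%N -> \rank U = j ->
  exists c : 'rV[R]_j, vnorm R d (c *m U) = 1.
Proof.
move=> j0 rU.
have rf : row_free U by rewrite /row_free rU.
pose i0 : 'I_j := Ordinal j0.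
pose c0 : 'rV[R]_j := delta_mx 0 i0.
have nz : c0 *m U != 0.
  apply/eqP => H.
  have : c0 *m U = 0 *m U by rewrite mul0mx.
  move/(row_free_inj rf) => /matrixP /(_ 0 i0).
  by rewrite !mxE !eqxx /= => /eqP; rewrite oner_eq0.
have [H _] := normalize nz; by eexists; exact: H.
Qed.

Lemma SU_bound j (U : 'M[R]_(j, d)) M y : SU U M y -> 0 <= y <= n1 M^T.
Proof.
case=> c /= H <-; rewrite vnorm_ge0 /=.
by apply: le_trans (vnorm_mul_le _ _) _; rewrite H mulr1.
Qed.

Lemma inf_SU_bound j (U : 'M[R]_(j, d)) M : 0 <= inf (SU U M) <= n1 M^T.
Proof.
have [E0|[y Sy]] : SU U M = set0 \/ exists y, SU U M y.
  case: (pselect (exists y, SU U M y)) => h; [by right|left].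
  by apply/seteqP; split=> z // Sz; apply: h; exists z.
  by rewrite E0 inf0 lexx n1_ge0.
have lb : has_lbound (SU U M) by exists 0 => z /SU_bound /andP[].
apply/andP; split.
  by apply: lb_le_inf; [exists y | move=> z /SU_bound /andP[]].
by apply: le_trans (ge_inf lb Sy) _; case/andP: (SU_bound Sy).
Qed.

Lemma sv_E j M : sv R d j M =
  sup [set x | exists U : 'M[R]_(j, d), \rank U = j /\ x = inf (SU U M)].
Proof. by []. Qed.

Lemma sv_ge j M (U : 'M[R]_(j, d)) (b : R) : (0 < j)%N -> \rank U = j ->
  (forall c : 'rV[R]_j, vnorm R d (c *m U) = 1 -> b <= vnorm R d ((c *m U) *m M^T)) ->
  b <= sv R d j M.
Proof.
move=> j0 rU H; rewrite sv_E.
have ub : has_ubound [set x | exists U : 'M[R]_(j, d), \rank U = j /\ x = inf (SU U M)].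
  by exists (n1 M^T) => x [V [_ ->]]; case/andP: (inf_SU_bound V M).
apply: le_trans (ub_le_sup ub _); last by exists U.
have [c1 Hc1] := unit_exists j0 rU.
apply: lb_le_inf; first by exists (vnorm R d ((c1 *m U) *m M^T)); exists c1.
by move=> z [c /= Hc <-]; apply: H.
Qed.

Lemma inf_SU_zero j (U : 'M[R]_(j, d)) M : \rank U = j -> (\rank M < j)%N ->
  inf (SU U M) = 0.
Proof.
move=> rU rM.
have rf : row_free U by rewrite /row_free rU.
have rk : (\rank (U *m M^T) < j)%N.
  by apply: leq_ltn_trans (mxrankM_maxr _ _) _; rewrite mxrank_tr.
pose K := kermx (U *m M^T).
have Knz : K != 0.
  by rewrite -mxrank_eq0 mxrank_ker subn_eq0 -ltnNge.
have [i Hi] : exists i, row i K != 0.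
  apply: contrapT => H; move/eqP: Knz; apply; apply/row_matrixP => i.
  rewrite row0; apply/eqP; apply/negPn/negP => Hn; apply: H; by exists i.
pose c0 := row i K.
have c0K : c0 *m (U *m M^T) = 0 by rewrite /c0 -row_mul mulmx_ker row0.
have nz : c0 *m U != 0.
  apply: contra Hi => /eqP H; apply/eqP.
  by apply: (row_free_inj rf); rewrite /= H mul0mx.
have [H1 H2] := normalize nz.
set c := _ *: c0 in H1 H2.
have S0 : SU U M 0.
  exists c => //=; rewrite H2 -scalemxAl -mulmxA c0K scaler0.
  exact: vnorm0.
have lb : has_lbound (SU U M) by exists 0 => z /SU_bound /andP[].
apply/le_anti/andP; split; first by apply: (ge_inf lb).
by apply: lb_le_inf; [exists 0 | move=> z /SU_bound /andP[]].
Qed.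

Lemma sv_zero j M : (j <= d)%N -> (\rank M < j)%N -> sv R d j M = 0.
Proof.
move=> jd rM; rewrite sv_E.
suff -> : [set x | exists U : 'M[R]_(j, d), \rank U = j /\ x = inf (SU U M)] = [set 0].
  by rewrite sup1.
apply/seteqP; split => x /=.
  by case=> U [rU ->]; rewrite inf_SU_zero.
move=> ->; exists (pid_mx j); rewrite rank_pid_mx //; split => //.
by rewrite inf_SU_zero // rank_pid_mx.
Qed.

End SV.

End PB.
Import PB.

Module PC.
Local Open Scope classical_set_scope.
Local Open Scope ring_scope.
Set Implicit Arguments. Unset Strict Implicit.

Section Chain.
Variable R : realType.
Variables m d : nat.
Implicit Types (A : 'I_m.+1 -> 'M[R]_d) (w : nat -> 'I_m.+1).

Lemma cp_tr A w n :
  (cocycle_prod R m d A w n.+1)^T = (cocycle_prod R m d A w n)^T *m (A (w n))^T.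
Proof. by rewrite /= trmx_mul. Qed.

Lemma rank_cp_le A w n : (\rank (cocycle_prod R m d A w n.+1) <= \rank (A (w n)))%N.
Proof. exact: mxrankM_maxl. Qed.

Lemma rank_cp_pair A w i a b : w i = b -> w i.+1 = a -> forall n, (i.+2 <= n)%N ->
  (\rank (cocycle_prod R m d A w n) <= \rank (A a *m A b))%N.
Proof.
move=> wi wi1; elim=> [//|n IH]; rewrite leq_eqVlt => /orP[/eqP [<-]|].
  by rewrite /= wi wi1 mulmxA; apply: mxrankM_maxl.
rewrite ltnS => /IH; apply: leq_trans; exact: mxrankM_maxr.
Qed.

Lemma le_sum1 (I : finType) (F : I -> R) i : (forall j, 0 <= F j) -> F i <= \sum_j F j.
Proof. by move=> H; rewrite (bigD1 i) //= lerDl sumr_ge0. Qed.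

Lemma exU (T : 'M[R]_d) r : \rank T = r ->
  exists U : 'M[R]_(r, d), \rank U = r /\ exists D : 'M[R]_(r, d), U = D *m T.
Proof.
move=> <-; exists (row_base T); split; first by apply/eqP; exact: row_base_free.
have /row_fullP [B HB] := col_base_full T.
exists B; have := congr1 (mulmx B) (mulmx_base T).
by rewrite mulmxA HB mul1mx.
Qed.

Lemma exK A k : (forall a, \rank (A a) = k) -> (forall a b, \rank (A a *m A b) = k) ->
  exists K : R, 0 < K /\ forall a b (y : 'rV[R]_d),
    vnorm R d (y *m (A b)^T) <= K * vnorm R d (y *m (A b)^T *m (A a)^T).
Proof.
move=> rA rAA.
have HN : forall a b, exists N : 'M[R]_d, (A b)^T = (A b)^T *m (A a)^T *m N.
  move=> a b.
  have := (mxrank_leqif_sup (submxMl (A a) (A b))).2.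
  rewrite rAA rA eqxx => /esym /submxP [D HD].
  by exists D^T; rewrite -!trmx_mul -HD.
have [N HN'] := choice (fun ab : 'I_m.+1 * 'I_m.+1 => HN ab.2 ab.1).
exists (1 + \sum_(ab : 'I_m.+1 * 'I_m.+1) n1 (N ab)); split.
  apply: (lt_le_trans ltr01); rewrite lerDl.
  by apply: sumr_ge0 => ab _; exact: n1_ge0.
move=> a b y.
rewrite {1}(HN' (b, a)) /= mulmxA.
apply: le_trans (vnorm_mul_le _ _) _.
rewrite mulmxA; apply: ler_wpM2r; first exact: vnorm_ge0.
apply: le_trans (le_sum1 (b, a) (fun ab => n1_ge0 (N ab))) _.
by rewrite lerDr.
Qed.

Lemma chain A w (K : R) : 0 < K ->
  (forall a b (y : 'rV[R]_d),
    vnorm R d (y *m (A b)^T) <= K * vnorm R d (y *m (A b)^T *m (A a)^T)) ->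
  forall n (x : 'rV[R]_d),
   (exists y b, x *m (A 0)^T *m (cocycle_prod R m d A w n)^T = y *m (A b)^T) /\
   vnorm R d (x *m (A 0)^T) <= K ^+ n * vnorm R d (x *m (A 0)^T *m (cocycle_prod R m d A w n)^T).
Proof.
move=> K0 HK; elim=> [|n IH] x.
  by rewrite /= trmx1 mulmx1 expr0 mul1r; split => //; exists x, 0.
have [[y [b Hy]] Hle] := IH x.
rewrite cp_tr mulmxA Hy; split; first by exists (y *m (A b)^T), (w n).
apply: le_trans Hle _; rewrite Hy exprS (mulrC K) -mulrA.
apply: ler_wpM2l; first by rewrite exprn_ge0 // ltW.
exact: HK.
Qed.

Lemma sv_cp_ge A w (K : R) k n : (0 < k)%N -> \rank (A 0) = k -> 0 < K ->
  (forall a b (y : 'rV[R]_d),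
    vnorm R d (y *m (A b)^T) <= K * vnorm R d (y *m (A b)^T *m (A a)^T)) ->
  (K ^+ n)^-1 <= sv R d k (cocycle_prod R m d A w n).
Proof.
move=> k0 rA0 K0 HK.
have [U [rU [D HU]]] := exU (etrans (mxrank_tr (A 0)) rA0).
apply: (sv_ge k0 rU) => c Hc.
have Kn0 : 0 < K ^+ n by rewrite exprn_gt0.
rewrite -(ler_pM2l Kn0) mulfV ?gt_eqF //.
have [_ H] := chain w K0 HK n (c *m D).
by rewrite HU mulmxA -Hc HU mulmxA.
Qed.

End Chain.

End PC.
Import PC.

Module PD.
Local Open Scope classical_set_scope.
Local Open Scope ring_scope.
Set Implicit Arguments. Unset Strict Implicit.

Section Lyap.
Variable R : realType.
Variables m d : nat.
Variable P : probability (Seq m) R.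

Lemma ae_ex (Q : Seq m -> Prop) : {ae P, forall w, Q w} -> exists w, Q w.
Proof.
case=> N [mN PN0 sub]; apply: contrapT => H.
have NT : N = setT.
  apply/seteqP; split => // w _; apply: sub => /= Qw; apply: H; by exists w.
by move: PN0; rewrite NT probability_setT => /eqP; rewrite onee_eq0.
Qed.

Lemma lyap_unique B j l1 l2 :
  lyap_limit R m d P B j l1 -> lyap_limit R m d P B j l2 -> l1 = l2.
Proof.
move=> H1 H2.
have := filterS2 (ae_filter_ringOfSetsType P) (fun w (h1 : _ --> l1) (h2 : _ --> l2) => conj h1 h2) H1 H2.
move=> Hae; have [w [h1 h2]] := ae_ex Hae.
by rewrite -(cvg_lim (@ereal_hausdorff R) h1) (cvg_lim (@ereal_hausdorff R) h2).
Qed.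

Lemma Lyap_eq B j l : lyap_limit R m d P B j l -> Lyap R m d P B j = l.
Proof.
move=> H; rewrite /Lyap; case: xgetP => [l' -> Hl'|H']; first exact: lyap_unique Hl' H.
by exfalso; apply: (H' l).
Qed.

Definition ufun B j (w : nat -> 'I_m.+1) :=
  fun n : nat => ((n%:R^-1)%:E * elog R (sv R d j (cocycle_prod R m d B w n)))%E.

Lemma cvg_Ny_of_sv0 B j w N :
  (forall n, (N <= n)%N -> sv R d j (cocycle_prod R m d B w n) = 0) ->
  ufun B j w @ \oo --> -oo%E.
Proof.
move=> H; apply: cvg_near_cst.
apply: filterS (nbhs_infty_ge (maxn N 1)) => n /=; rewrite geq_max => /andP[Nn n1].
by rewrite /ufun H // /elog ltxx mulrNy gtr0_sg ?invr_gt0 ?ltr0n // mul1e.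
Qed.

Lemma part_i B k : (k < d)%N -> (forall a, \rank (B a) = k) ->
  Lyap R m d P B k.+1 = -oo%E.
Proof.
move=> kd rB; apply: Lyap_eq; apply: aeW => w.
apply: (@cvg_Ny_of_sv0 _ _ _ 1) => -[//|n] _.
by apply: sv_zero => //; rewrite ltnS -(rB (w n)); apply: rank_cp_le.
Qed.

Lemma ufun_ge B k w (K : R) n : (0 < k)%N -> \rank (B 0) = k -> 0 < K ->
  (forall a b (y : 'rV[R]_d),
    vnorm R d (y *m (B b)^T) <= K * vnorm R d (y *m (B b)^T *m (B a)^T)) ->
  (0 < n)%N -> ((- ln K)%:E <= ufun B k w n)%E.
Proof.
move=> k0 rB0 K0 HK n0.
have Kn0 : 0 < (K ^+ n)^-1 by rewrite invr_gt0 exprn_gt0.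
have hs := sv_cp_ge w n k0 rB0 K0 HK.
have s0 : 0 < sv R d k (cocycle_prod R m d B w n) := lt_le_trans Kn0 hs.
rewrite /ufun /elog s0 -EFinM lee_fin.
have e : n%:R^-1 * - (ln K *+ n) = - ln K.
  by rewrite -[ln K *+ n]mulr_natr mulrN mulrCA mulVf ?mulr1 // pnatr_eq0 -lt0n.
rewrite -e; apply: ler_wpM2l; first by rewrite invr_ge0 ler0n.
have -> : - (ln K *+ n) = ln ((K ^+ n)^-1).
  by rewrite lnV ?lnXn // posrE exprn_gt0.
by rewrite ler_ln // posrE.
Qed.

Lemma part_ii_fwd B k : (0 < k)%N -> (forall a, \rank (B a) = k) ->
  (forall a b, \rank (B a *m B b) = k) -> (-oo < Lyap R m d P B k)%E.
Proof.
move=> k0 rB rBB.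
have [K [K0 HK]] := exK rB rBB.
case: (pselect (exists l, lyap_limit R m d P B k l)) => [[l Hl]|Hn]; last first.
  by rewrite /Lyap xgetPN ?ltNyr // => l Hl; apply: Hn; exists l.
rewrite (Lyap_eq Hl).
have [w hw] := ae_ex Hl.
apply: (@lt_le_trans _ _ (- ln K)%:E); first exact: ltNyr.
rewrite -(cvg_lim (@ereal_hausdorff R) hw).
apply: lime_ge; first by apply/cvg_ex; exists l.
apply: filterS (nbhs_infty_ge 1) => n /= n1.
exact: (@ufun_ge B k w K n k0 (rB 0) K0 HK n1).
Qed.

End Lyap.

End PD.
Import PD.

Module PE.
Local Open Scope classical_set_scope.
Local Open Scope ring_scope.
Set Implicit Arguments. Unset Strict Implicit.

Section Bern.
Variable R : realType.
Variable m : nat.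
Variable p : 'I_m.+1 -> R.
Variable P : probability (Seq m) R.
Hypothesis p_pos : forall a, 0 < p a.
Hypothesis p_sum : \sum_(a < m.+1) p a = 1.
Hypothesis P_bern : bernoulli_product R m p P.

Definition cyl (s : seq 'I_m.+1) : set (Seq m) :=
  [set w : Seq m | forall i, (i < size s)%N -> w i = nth ord0 s i].

Lemma gen_meas j (x : 'I_m.+1) : measurable [set w : Seq m | w j = x].
Proof. by apply: sub_sigma_algebra; exists j, x. Qed.

Lemma cyl_meas s : measurable (cyl s).
Proof.
have -> : cyl s = \bigcap_j (if (j < size s)%N then [set w : Seq m | w j = nth ord0 s j] else setT).
  apply/seteqP; split => w /=.
    by move=> H j _; case: ifP => // /H.
  by move=> H i Hi; have := H i I; rewrite Hi.
by apply: bigcapT_measurable => j; case: ifP => _ //; apply: gen_meas.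
Qed.

Lemma prod_double (h : nat -> R) N :
  \prod_(0 <= j < N.*2) h j = \prod_(0 <= i < N) (h i.*2 * h i.*2.+1).
Proof.
elim: N => [|N IH]; first by rewrite !big_nil.
by rewrite doubleS !big_nat_recr //= IH mulrA.
Qed.

Section Pairs.
Variables a b : 'I_m.+1.
Variable n : nat.

Definition pT := ('I_m.+1 * 'I_m.+1)%type.

Definition sq (f : {ffun 'I_n.+1 -> pT}) : seq 'I_m.+1 :=
  mkseq (fun j => if odd j then (f (inord j./2)).2 else (f (inord j./2)).1) n.+1.*2.

Definition Cf (f : {ffun 'I_n.+1 -> pT}) := cyl (sq f).

Lemma sq_nth f j : (j < n.+1.*2)%N ->
  nth ord0 (sq f) j = if odd j then (f (inord j./2)).2 else (f (inord j./2)).1.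
Proof. by move=> H; rewrite /sq nth_mkseq. Qed.

Lemma Cf_mem f (w : Seq m) :
  Cf f w <-> forall i : 'I_n.+1, w (val i).*2 = (f i).1 /\ w (val i).*2.+1 = (f i).2.
Proof.
have E : size (sq f) = n.+1.*2 by rewrite size_mkseq.
rewrite /Cf /cyl E; split.
  move=> H i; have ii : (i < n.+1)%N by [].
  have i1 : (i.*2 < n.+1.*2)%N by rewrite ltn_double.
  have i2 : (i.*2.+1 < n.+1.*2)%N by rewrite -doubleS leq_double.
  rewrite H // H // !sq_nth // odd_double /=.
  by rewrite odd_double /= half_double uphalf_double inord_val.
move=> H j Hj; rewrite sq_nth //.
have Hj2 : (j./2 < n.+1)%N.
  by rewrite -ltn_double (leq_ltn_trans _ Hj) // -{2}(odd_double_half j) leq_addl.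
have [HA HB] := H (Ordinal Hj2).
rewrite -{1}(odd_double_half j); case: (odd j) => /=; rewrite ?add0n ?add1n.
  by rewrite HB; congr (f _).2; apply: val_inj; rewrite /= inordK.
by rewrite HA; congr (f _).1; apply: val_inj; rewrite /= inordK.
Qed.

Lemma Cf_disj f g : f != g -> Cf f `&` Cf g = set0.
Proof.
move=> fg; apply/seteqP; split => // w [/Cf_mem Hf /Cf_mem Hg].
move/eqP: fg; apply; apply/ffunP => i.
have [f1 f2] := Hf i; have [g1 g2] := Hg i.
by rewrite [f i]surjective_pairing [g i]surjective_pairing -f1 -f2 -g1 -g2.
Qed.

Lemma P_Cf f : P (Cf f) = (\prod_i (p (f i).1 * p (f i).2))%:E.
Proof.
rewrite /Cf P_bern; congr (_%:E).
rewrite /sq /mkseq big_map -[iota 0 _]/(index_iota 0 n.+1.*2) prod_double big_mkord.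
apply: eq_bigr => i _.
by rewrite /= !odd_double /= half_double uphalf_double !inord_val.
Qed.

Definition good (f : {ffun 'I_n.+1 -> pT}) := [forall i, f i != (b, a)].
Definition Un := \big[setU/set0]_(f | good f) Cf f.

Lemma Cf_meas f : measurable (Cf f).
Proof. exact: cyl_meas. Qed.

Lemma disj_big (r : seq {ffun 'I_n.+1 -> pT}) (Q : pred {ffun 'I_n.+1 -> pT}) x :
  x \notin r -> Cf x `&` \big[setU/set0]_(f <- r | Q f) Cf f = set0.
Proof.
elim: r => [|y r IH]; first by rewrite big_nil setI0.
rewrite in_cons negb_or => /andP[xy xr]; rewrite big_cons.
case: (Q y); last exact: IH.
by rewrite setIUr IH // Cf_disj // setU0.
Qed.

Lemma P_union (r : seq {ffun 'I_n.+1 -> pT}) (Q : pred {ffun 'I_n.+1 -> pT}) :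
  uniq r -> P (\big[setU/set0]_(f <- r | Q f) Cf f) = (\sum_(f <- r | Q f) P (Cf f))%E.
Proof.
elim: r => [|x r IH]; first by rewrite !big_nil measure0.
move=> /= /andP[xr ur]; rewrite !big_cons.
case: (Q x); last exact: IH.
have Hm : measurable (\big[setU/set0]_(f <- r | Q f) Cf f).
  by apply: bigsetU_measurable => f _; exact: Cf_meas.
by rewrite (measureU P (Cf_meas x) Hm (disj_big _ xr)); congr (_ + _)%E; apply: IH.
Qed.

Lemma Un_meas : measurable Un.
Proof. by apply: bigsetU_measurable => f _; exact: Cf_meas. Qed.

Definition Fp (xy : pT) := p xy.1 * p xy.2.

Lemma sum_Fp : \sum_(xy : pT | xy != (b, a)) Fp xy = 1 - p b * p a.
Proof.
have tot : \sum_(xy : pT) Fp xy = 1.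
  rewrite -(pair_bigA _ (fun x y => p x * p y)) /=.
  under eq_bigr do rewrite -mulr_sumr.
  by rewrite -mulr_suml p_sum mulr1.
by rewrite -tot [in RHS](bigD1 (b, a)) //= addrC addrK.
Qed.

Lemma P_Un : P Un = ((1 - p b * p a) ^+ n.+1)%:E.
Proof.
rewrite /Un P_union ?index_enum_uniq //.
under eq_bigr do rewrite P_Cf.
rewrite sumEFin; congr (_%:E).
pose F' (xy : pT) := if xy != (b, a) then Fp xy else 0.
have -> : \sum_(f | good f) \prod_i (p (f i).1 * p (f i).2) =
          \sum_(f : {ffun 'I_n.+1 -> pT}) \prod_i F' (f i).
  rewrite big_mkcond /=; apply: eq_bigr => f _.
  case: ifP => [/forallP gf|/negbT/forallPn [i /negPn fi]].
    by apply: eq_bigr => i _; rewrite /F' gf.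
  by rewrite (bigD1 i) //= /F' fi mul0r.
rewrite -(bigA_distr_bigA (fun (i : 'I_n.+1) xy => F' xy)) /=.
rewrite prodr_const card_ord -sum_Fp; congr (_ ^+ _); rewrite [RHS]big_mkcond; by apply: eq_bigr.
Qed.

End Pairs.
Lemma ae_occ a b :
  {ae P, forall w : Seq m, exists j, w j.*2 = b /\ w j.*2.+1 = a}.
Proof.
exists (\bigcap_n Un a b n); split.
- by apply: bigcapT_measurable => n; exact: Un_meas.
- set r := 1 - p b * p a.
  have r0 : 0 <= r by rewrite /r -sum_Fp; apply: sumr_ge0 => xy _; rewrite mulr_ge0 // ltW.
  have r1 : `|r| < 1 by rewrite ger0_norm // /r gtrBl mulr_gt0.
  apply/le_anti/andP; split; last exact: measure_ge0.
  apply/lee_addgt0Pr => e e0; rewrite add0e.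
  have := (cvgrPdist_lt _ _).1 (cvg_expr r1) e e0.
  case=> N _ HN.
  have HN1 : r ^+ N.+1 < e.
    by have := HN N.+1 (leqnSn N); rewrite /= sub0r normrN ger0_norm // exprn_ge0.
  apply: (@le_trans _ _ (P (Un a b N))).
    apply: le_measure; rewrite ?inE.
    + by apply: bigcapT_measurable => n; exact: Un_meas.
    + exact: Un_meas.
    + by apply: bigcap_inf.
  by rewrite P_Un lee_fin ltW.
- move=> w /= Hw n _.
  pose f : {ffun 'I_n.+1 -> pT} := [ffun i => (w (val i).*2, w (val i).*2.+1)].
  have gf : good a b f.
    apply/forallP => i; apply/negP => /eqP; rewrite ffunE => -[e1 e2].
    by apply: Hw; exists i.
  rewrite /Un (bigD1 f) //=; left; apply/Cf_mem => i; by rewrite ffunE.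
Qed.

End Bern.

End PE.
Import PE.

Module PF.
Local Open Scope classical_set_scope.
Local Open Scope ring_scope.
Set Implicit Arguments. Unset Strict Implicit.

Lemma part_ii_bwd (R : realType) (m d k : nat) (p : 'I_m.+1 -> R)
    (P : probability (Seq m) R)
    (p_pos : forall a, 0 < p a) (p_sum : \sum_(a < m.+1) p a = 1)
    (P_bern : bernoulli_product R m p P) (kd : (k <= d)%N)
    (B : 'I_m.+1 -> 'M[R]_d) (rB : forall a, \rank (B a) = k) :
  (-oo < Lyap R m d P B k)%E -> forall a b, \rank (B a *m B b) = k.
Proof.
move=> H a b; apply/eqP; rewrite eqn_leq -{1}(rB b) mxrankM_maxr /=.
rewrite leqNgt; apply/negP => lt.
suff : Lyap R m d P B k = -oo%E by move=> E; move: H; rewrite E ltxx.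
apply: Lyap_eq.
apply: filterS (ae_occ p_pos p_sum P_bern a b) => w [j [e1 e2]].
apply: (@cvg_Ny_of_sv0 R m d B k w j.*2.+2) => n Hn.
apply: sv_zero => //.
apply: leq_ltn_trans lt; exact: (@rank_cp_pair R m d B w j.*2 a b e1 e2 n Hn).
Qed.

End PF.
Import PF.

Module PG.
Import fingroup perm.
Import numFieldNormedType.Exports.
Local Open Scope classical_set_scope.
Local Open Scope ring_scope.
Set Implicit Arguments. Unset Strict Implicit.

Section Topo.
Variable R : realType.
Variables m d : nat.
Local Notation T := ('I_m.+1 -> 'M[R]_d).

Definition Fc (B0 : T) : set_system T :=
  filter_from (fun e : R => 0 < e) (fun e => [set B | Defs.close R m d e B0 B]).

Lemma close_le e e' (B B' : T) : e <= e' -> Defs.close R m d e B B' -> Defs.close R m d e' B B'.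
Proof. by move=> ee H a i j; apply: lt_le_trans (H a i j) ee. Qed.

Lemma close_trans e1 e2 (B1 B2 B3 : T) :
  Defs.close R m d e1 B1 B2 -> Defs.close R m d e2 B2 B3 -> Defs.close R m d (e1 + e2) B1 B3.
Proof.
move=> H1 H2 a i j; apply: le_lt_trans (ler_distD (B2 a i j) _ _) _.
by rewrite addrC ltrD.
Qed.

Global Instance Fc_filter B0 : Filter (Fc B0).
Proof.
apply: filter_from_filter; first by exists 1.
move=> e1 e2 e10 e20; exists (Num.min e1 e2); first by rewrite lt_min e10.
move=> B H; split; apply: close_le H; by rewrite ge_min lexx ?orbT.
Qed.

Lemma cvg_coord B0 a i j : (fun B : T => B a i j) @ Fc B0 --> B0 a i j.
Proof.
apply/cvgrPdist_lt => e e0; exists e => // B /= H.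
by rewrite distrC; apply: H.
Qed.

Lemma cvg_big_sum B0 (I : Type) (r : seq I) (f : I -> T -> R) (x : I -> R) :
  (forall i, f i @ Fc B0 --> x i) ->
  (fun B => \sum_(i <- r) f i B) @ Fc B0 --> \sum_(i <- r) x i.
Proof.
move=> H; elim: r => [|y r IH].
  under eq_fun do rewrite big_nil. rewrite big_nil; exact: cvg_cst.
under eq_fun do rewrite big_cons. rewrite big_cons.
exact: cvgD (H y) IH.
Qed.

Lemma cvg_big_prod B0 (I : Type) (r : seq I) (f : I -> T -> R) (x : I -> R) :
  (forall i, f i @ Fc B0 --> x i) ->
  (fun B => \prod_(i <- r) f i B) @ Fc B0 --> \prod_(i <- r) x i.
Proof.
move=> H; elim: r => [|y r IH].
  under eq_fun do rewrite big_nil. rewrite big_nil; exact: cvg_cst.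
under eq_fun do rewrite big_cons. rewrite big_cons.
exact: cvgM (H y) IH.
Qed.

Definition ctsM p q (G : T -> 'M[R]_(p, q)) B0 :=
  forall i j, (fun B => G B i j) @ Fc B0 --> G B0 i j.

Lemma ctsM_cst p q (M : 'M[R]_(p, q)) B0 : ctsM (fun _ => M) B0.
Proof. by move=> i j; exact: cvg_cst. Qed.

Lemma ctsM_coord a B0 : ctsM (fun B : T => B a) B0.
Proof. by move=> i j; exact: cvg_coord. Qed.

Lemma ctsM_mul p q s (G1 : T -> 'M[R]_(p, q)) (G2 : T -> 'M[R]_(q, s)) B0 :
  ctsM G1 B0 -> ctsM G2 B0 -> ctsM (fun B => G1 B *m G2 B) B0.
Proof.
move=> H1 H2 i j.
under eq_fun do rewrite mxE. rewrite mxE.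
apply: (cvg_big_sum (f := fun l B => G1 B i l * G2 B l j)) => l.
exact: cvgM (H1 i l) (H2 l j).
Qed.

Lemma cts_det q (G : T -> 'M[R]_q) B0 :
  ctsM G B0 -> (fun B => \det (G B)) @ Fc B0 --> \det (G B0).
Proof.
move=> H; rewrite /determinant.
apply: (cvg_big_sum (f := fun (s : {perm 'I_q}) B => (-1) ^+ s * \prod_i G B i (s i))) => s.
apply: cvgM; first exact: cvg_cst.
by apply: (cvg_big_prod (f := fun i B => G B i (s i))) => i; exact: H.
Qed.

Lemma near_neq0 B0 (g : T -> R) : g @ Fc B0 --> g B0 -> g B0 != 0 ->
  \forall B \near Fc B0, g B != 0.
Proof.
move=> H gn0; have := (cvgrPdist_lt _ _).1 H `|g B0|; rewrite normr_gt0 => /(_ _ gn0).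
apply: filterS => B; apply: contraTneq => ->; by rewrite subr0 ltxx.
Qed.

End Topo.

End PG.
Import PG.

Module PH.
Import fingroup perm.
Import numFieldNormedType.Exports.
Local Open Scope classical_set_scope.
Local Open Scope ring_scope.
Set Implicit Arguments. Unset Strict Implicit.

Section Open.
Variable R : realType.
Variables m d : nat.
Local Notation T := ('I_m.+1 -> 'M[R]_d).

Lemma factor p q (M : 'M[R]_(p, q)) r : \rank M = r ->
  exists (C : 'M[R]_(p, r)) (Rr : 'M[R]_(r, q)) (L : 'M[R]_(r, p)) (Ri : 'M[R]_(q, r)),
    [/\ M = C *m Rr, L *m C = 1%:M & Rr *m Ri = 1%:M].
Proof.
move=> <-; have /row_fullP [L HL] := col_base_full M.
have /row_freeP [Ri HRi] := row_base_free M.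
by exists (col_base M), (row_base M), L, Ri; rewrite mulmx_base.
Qed.

Lemma rank_ge_det r p (X : 'M[R]_(r, p)) (M : 'M[R]_p) (Y : 'M[R]_(p, r)) :
  \det (X *m M *m Y) != 0 -> (r <= \rank M)%N.
Proof.
move=> H; have U : X *m M *m Y \in unitmx by rewrite unitmxE unitfE.
rewrite -{1}(mxrank_unit U).
apply: leq_trans (mxrankM_maxl _ _) _; exact: mxrankM_maxr.
Qed.

Lemma near_good (B0 : T) a b k : \rank (B0 a *m B0 b) = k ->
  \forall B \near Fc B0, (k <= \rank (B a *m B b))%N.
Proof.
move=> rk; have [C [Rr [L [Ri [EM HL HR]]]]] := factor rk.
pose g (B : T) := \det (L *m (B a *m B b) *m Ri).
have g0 : g B0 = 1 by rewrite /g EM mulmxA HL mul1mx HR det1.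
have cg : g @ Fc B0 --> g B0.
  apply: cts_det; apply: ctsM_mul; last exact: ctsM_cst.
  apply: ctsM_mul; first exact: ctsM_cst.
  by apply: ctsM_mul; exact: ctsM_coord.
have := near_neq0 cg; rewrite g0 oner_neq0 => /(_ isT).
apply: filterS => B; exact: rank_ge_det.
Qed.

Lemma S_open k :
  rel_open R m d (Ck R m d k)
    [set B | Ck R m d k B /\ forall a b : 'I_m.+1, \rank (B a *m B b) = k].
Proof.
split; first by move=> B [].
move=> B [_ HB].
have := @filter_forall _ _ (fun ab : 'I_m.+1 * 'I_m.+1 =>
   [set B' : T | (k <= \rank (B' ab.1 *m B' ab.2))%N]) (Fc B) _
   (fun ab => near_good (HB ab.1 ab.2)).
case=> e e0 He; exists e; split => // B' CB' cl; split => // a b.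
apply/eqP; rewrite eqn_leq -{1}(CB' b) mxrankM_maxr /=.
exact: (He B' cl (a, b)).
Qed.

End Open.

End PH.
Import PH.

Module PI.
Import fingroup perm.
Import numFieldNormedType.Exports.
Local Open Scope classical_set_scope.
Local Open Scope ring_scope.
Set Implicit Arguments. Unset Strict Implicit.

Section Dense.
Variable R : realType.

Lemma root_avoid (pl : {poly R}) (tau : R) : pl != 0 -> 0 < tau ->
  exists t, 0 < t < tau /\ pl.[t] != 0.
Proof.
move=> pn0 t0; apply: contrapT => H.
pose f := fun i : nat => tau / (i.+2)%:R.
have fin : injective f.
  move=> i j; rewrite /f => /(mulfI (lt0r_neq0 t0)) /invr_inj /eqP.
  by rewrite eqr_nat => /eqP [].
have Hall : all (root pl) (mkseq f (size pl)).
  apply/allP => x /mapP [i _ ->]; apply/negPn/negP => nr; apply: H; exists (f i); split => //.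
  rewrite /f divr_gt0 ?ltr0n //= ltr_pdivrMr ?ltr0n // ltr_pMr // ltr1n //.
have := max_poly_roots pn0 Hall (mkseq_uniq (size pl) fin).
by rewrite size_mkseq ltnn.
Qed.

Lemma det_eval q (Mp : 'M[{poly R}]_q) (t : R) :
  (\det Mp).[t] = \det (map_mx (horner_eval t) Mp).
Proof. by rewrite det_map_mx. Qed.

Variables m d : nat.
Local Notation T := ('I_m.+1 -> 'M[R]_d).

Lemma le_sum1' (I : finType) (F : I -> R) i : (forall j, 0 <= F j) -> F i <= \sum_j F j.
Proof. by move=> H; rewrite (bigD1 i) //= lerDl sumr_ge0. Qed.

Lemma fix_pair k (B : T) a b e : Ck R m d k B -> 0 < e ->
  exists B' : T, [/\ Ck R m d k B', Defs.close R m d e B B' & \rank (B' a *m B' b) = k].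
Proof.
move=> CB e0.
have [Ca [Ra [La [Ria [EA HLa HRa]]]]] := PH.factor (CB a).
have [Cb [Rb [Lb [Rib [EB HLb HRb]]]]] := PH.factor (CB b).
pose H := Ria *m Lb.
pose Z := Ra *m Cb.
pose G (t : R) : 'M[R]_d := (1 - t) *: 1%:M + t *: H.
pose Gp : 'M[{poly R}]_d :=
  \matrix_(i, j) ((1 - 'X) * ((1%:M : 'M[R]_d) i j)%:P + 'X * (H i j)%:P).
pose Zp : 'M[{poly R}]_k :=
  \matrix_(i, j) ((1 - 'X) * (Z i j)%:P + 'X * ((1%:M : 'M[R]_k) i j)%:P).
have evG t : map_mx (horner_eval t) Gp = G t.
  by apply/matrixP => i j; rewrite !mxE /= horner_evalE !hornerE.
have evZ t : map_mx (horner_eval t) Zp = (1 - t) *: Z + t *: 1%:M.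
  by apply/matrixP => i j; rewrite !mxE /= horner_evalE !hornerE.
have Gp0 : \det Gp != 0.
  have : (\det Gp).[0] = 1 by rewrite det_eval evG /G subr0 scale1r scale0r addr0 det1.
  by apply: contraPneq => ->; rewrite horner0 => /eqP; rewrite eq_sym oner_eq0.
have Zp0 : \det Zp != 0.
  have : (\det Zp).[1] = 1 by rewrite det_eval evZ subrr scale0r add0r scale1r det1.
  by apply: contraPneq => ->; rewrite horner0 => /eqP; rewrite eq_sym oner_eq0.
pose X c := B c *m (H - 1%:M).
pose Kc := 1 + \sum_c \sum_i \sum_j `|X c i j|.
have Kc0 : 0 < Kc.
  apply: (lt_le_trans ltr01); rewrite lerDl.
  by apply: sumr_ge0 => c _; apply: sumr_ge0 => i _; apply: sumr_ge0.
have XK c i j : `|X c i j| <= Kc.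
  apply: (@le_trans _ _ (\sum_c \sum_i \sum_j `|X c i j|)); last by rewrite lerDr.
  have h1 := @le_sum1' _ (fun j => `|X c i j|) j (fun _ => normr_ge0 _).
  have h2 := @le_sum1' _ (fun i => \sum_j `|X c i j|) i
     (fun _ => sumr_ge0 _ (fun _ _ => normr_ge0 _)).
  have h3 := @le_sum1' _ (fun c => \sum_i \sum_j `|X c i j|) c
     (fun _ => sumr_ge0 _ (fun _ _ => sumr_ge0 _ (fun _ _ => normr_ge0 _))).
  exact: le_trans h1 (le_trans h2 h3).
have [t [/andP[t0 tlt] Qt]] := root_avoid (mulf_neq0 Gp0 Zp0) (divr_gt0 e0 Kc0).
move: Qt; rewrite hornerM mulf_eq0 negb_or => /andP[q1 q2].
move: q1 q2; rewrite !det_eval evG evZ => q1 q2.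
have Gu : G t \in unitmx by rewrite unitmxE unitfE.
exists (fun c => B c *m G t); split.
- by move=> c; rewrite mxrankMfree ?CB // row_free_unit.
- move=> c i j.
  have GE : G t = 1%:M + t *: (H - 1%:M).
    by rewrite /G scalerBl scale1r scalerBr addrA addrAC.
  rewrite GE mulmxDr mulmx1 -scalemxAr mxE [B c i j + _]addrC addrK mxE.
  rewrite normrM (ger0_norm (ltW t0)).
  apply: (@le_lt_trans _ _ (t * Kc)); first by rewrite ler_wpM2l // ?(ltW t0) ?XK.
  by rewrite -ltr_pdivlMr.
- rewrite mulmxA mxrankMfree ?row_free_unit //.
  apply/eqP; rewrite eqn_leq -{1}(CB b) mxrankM_maxr /=.
  apply: (@rank_ge_det R k d La _ Rib).
  have -> : La *m (B a *m G t *m B b) *m Rib = (1 - t) *: Z + t *: 1%:M.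
    rewrite EA EB !mulmxA HLa mul1mx -(mulmxA _ Rb) HRb mulmx1.
    rewrite /G mulmxDr mulmxDl -!scalemxAr -!scalemxAl mulmx1 /Z.
    by rewrite /H !mulmxA HRa mul1mx HLb.
  exact: q2.
Qed.

End Dense.

End PI.
Import PI.

Module PJ.
Import fingroup perm.
Import numFieldNormedType.Exports.
Local Open Scope classical_set_scope.
Local Open Scope ring_scope.
Set Implicit Arguments. Unset Strict Implicit.

Section Dense2.
Variable R : realType.
Variables m d : nat.
Local Notation T := ('I_m.+1 -> 'M[R]_d).

Lemma dense_list k (L : seq ('I_m.+1 * 'I_m.+1)) (B : T) e :
  Ck R m d k B -> 0 < e ->
  exists B' : T, [/\ Ck R m d k B', Defs.close R m d e B B' &
     forall ab, ab \in L -> \rank (B' ab.1 *m B' ab.2) = k].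
Proof.
elim: L B e => [|ab L IH] B e CB e0.
  by exists B; split => // c i j; rewrite subrr normr0.
have e20 : 0 < e / 2 by rewrite divr_gt0.
have [B1 [CB1 cl1 G1]] := IH B (e / 2) CB e20.
have := @filter_forall _ _ (fun ab' : 'I_m.+1 * 'I_m.+1 =>
   [set B' : T | ab' \in L -> (k <= \rank (B' ab'.1 *m B' ab'.2))%N]) (Fc B1) _.
case.
  move=> ab'; case abL : (ab' \in L).
    by apply: filterS (near_good (G1 ab' abL)) => B' /= H _.
  by apply: filterS filterT => B' _ /= H; move: abL; rewrite H.
move=> dl dl0 Hdl.
have e'0 : 0 < Num.min dl (e / 2) by rewrite lt_min dl0 e20.
have [B2 [CB2 cl2 r2]] := fix_pair ab.1 ab.2 CB1 e'0.
exists B2; split => //.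
  refine (PG.close_le _ (PG.close_trans cl1 cl2)).
  by rewrite [X in _ <= X](splitr e) lerD2l ge_min lexx orbT.
move=> ab'; rewrite in_cons => /orP[/eqP -> //|abL].
apply/eqP; rewrite eqn_leq -{1}(CB2 ab'.2) mxrankM_maxr /=.
apply: (Hdl B2) => //.
by refine (PG.close_le _ cl2); rewrite ge_min lexx.
Qed.

Lemma S_dense k :
  rel_dense R m d (Ck R m d k)
    [set B | Ck R m d k B /\ forall a b : 'I_m.+1, \rank (B a *m B b) = k].
Proof.
split; first by move=> B [].
move=> B CB e e0.
have [B' [CB' cl G]] := dense_list (enum {: 'I_m.+1 * 'I_m.+1}) CB e0.
exists B'; split => //; split => // a b.
by apply: (G (a, b)); rewrite mem_enum.
Qed.

End Dense2.

End PJ.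
Import PJ.

Unset Implicit Arguments. Set Strict Implicit.

Theorem proposition2p4 (R : realType) (m d k : nat) (p : 'I_m.+1 -> R)
    (P : probability (Seq m) R)
    (p_pos : forall a, 0 < p a) (p_sum : \sum_(a < m.+1) p a = 1)
    (P_bern : bernoulli_product R m p P)
    (k_ge1 : (1 <= k)%N) (k_led : (k <= d)%N)
    (A : 'I_m.+1 -> 'M[R]_d) (A_Ck : Ck R m d k A) :
  ((k < d)%N -> Lyap R m d P A k.+1 = -oo%E) /\
  ((forall a b : 'I_m.+1, \rank (A a *m A b) = k) <-> (-oo < Lyap R m d P A k)%E) /\
  (let S := [set B | Ck R m d k B /\
                     forall a b : 'I_m.+1, \rank (B a *m B b) = k] in
   rel_open R m d (Ck R m d k) S /\ rel_dense R m d (Ck R m d k) S).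
Proof.
split; first by move=> kd; exact: part_i kd A_Ck.
split.
  split => H; first exact: part_ii_fwd k_ge1 A_Ck H.
  exact: (@part_ii_bwd R m d k p P p_pos p_sum P_bern k_led A A_Ck H).
by split; [exact: S_open | exact: S_dense].
Qed.
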